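(* Let $P$ be a stochastic matrix over a countable set $\Omega$, let $C\subseteq\Omega$ and let $p=\sum_{i\in C}p_i\in\ell^\infty(\Omega)$. Then $p$ is reducing for $Arv(P)$ if and only if for every path $\gamma:\{0,\dots,\ell\}\to\Omega$ in the directed graph of $P$ with $\gamma(0),\gamma(\ell)\in C$ one has $\gamma(k)\in C$ for all $0\le k\le\ell$.
   Context: A stochastic matrix has nonnegative entries and row sums $1$; $P^{(n)}_{ij}$ is the $(i,j)$ entry of $P^n$; $p_i$ is the indicator of $\{i\}$. A path in $P$ is $\gamma:\{0,\dots,\ell\}\to\Omega$ with $P_{\gamma(k)\gamma(k+1)}>0$ for $0\le k\le\ell-1$. $Arv(P)$: $Arv(P)_0=\ell^\infty(\Omega)$; $Arv(P)_n$ ($n\ge1$) is the set of complex $\Omega\times\Omega$ matrices $A=[a_{ij}]$ with $a_{ij}=0$ whenever $P^{(n)}_{ij}=0$ and $\sup_j\sum_i|a_{ij}|^2<\infty$, a W*-correspondence over $\ell^\infty(\Omega)$ with actions by diagonal matrices and inner product $\mathrm{Diag}(A^*B)$; $U_{n,m}(A\otimes B)=(\sqrt{P^{n+m}})^{\flat}*[(\sqrt{P^n}*A)(\sqrt{P^m}*B)]$ for $n,m\ge1$ ($*$ entrywise product, $\sqrt\cdot$ entrywise, $M^\flat_{ik}=M_{ik}^{-1}$ if $M_{ik}>0$, else $0$), $U_{0,n},U_{n,0}$ module actions. A projection $p\in\ell^\infty(\Omega)$ is reducing for $Arv(P)$ if $U_{n,m}^*(p\,Arv(P)_{n+m}\,p)\subseteq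 p\,Arv(P)_n\,p\otimes p\,Arv(P)_m\,p$ for all $n,m$. *)

(* Defs.v *)
From HB Require Import structures.
From mathcomp Require Import all_boot all_algebra.
From mathcomp Require Import all_classical all_reals all_analysis.
From mathcomp Require Export complex.
Export GRing.Theory Num.Theory.

Set Implicit Arguments.
Unset Strict Implicit.
Unset Printing Implicit Defensive.

Local Open Scope ring_scope.
Local Open Scope classical_set_scope.

Section ArvDefs.
Variables (R : realType) (T : countType).

Definition csq (z : R[i]) : R := complex.Re z ^+ 2 + complex.Im z ^+ 2.

(* sum of a real family over a countable type (meaningful for absolutely
   summable families): positive part minus negative part *)
Definition rsum {I : choiceType} (f : I -> R) : R :=
  fine (\esum_(x in [set: I]) (Num.max (f x) 0)%:E)
  - fine (\esum_(x in [set: I]) (Num.max (- f x) 0)%:E).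

Definition csum {I : choiceType} (f : I -> R[i]) : R[i] :=
  (rsum (fun x => complex.Re (f x)))%:C%C
  + 'i%C * (rsum (fun x => complex.Im (f x)))%:C%C.

Definition stochastic (P : T -> T -> R) : Prop :=
  (forall i j, 0 <= P i j) /\
  (forall i, \esum_(j in [set: T]) (P i j)%:E = 1%E).

Fixpoint Ppow (P : T -> T -> R) (n : nat) (i j : T) : R :=
  match n with
  | 0 => if i == j then 1 else 0
  | n'.+1 => fine (\esum_(k in [set: T]) (Ppow P n' i k * P k j)%:E)
  end.

Definition flat (x : R) : R := if 0 < x then x^-1 else 0.

(* Arv(P)_n : matrices supported on {P^(n) > 0} with sup_j sum_i |a_ij|^2 < oo.
   (For n = 0 this is the diagonal matrices with bounded diagonal, i.e.
   l^oo(Omega) acting by multiplication.) *)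
Definition Arv (P : T -> T -> R) (n : nat) : set (T -> T -> R[i]) :=
  [set A | (forall i j, Ppow P n i j = 0 -> A i j = 0) /\
           exists M : R, forall j,
             (\esum_(i in [set: T]) (csq (A i j))%:E <= M%:E)%E].

(* the l^oo(Omega)-valued inner product Diag(A^* B) *)
Definition ipArv (A B : T -> T -> R[i]) (j : T) : R[i] :=
  csum (fun i => (A i j)^* * B i j).

Definition ind (C : set T) (i : T) : R[i] := if `[< C i >] then 1 else 0.

Definition compress (C : set T) (X : set (T -> T -> R[i])) :=
  [set (fun i j => ind C i * A i j * ind C j) | A in X].

(* Concrete model of the W*-correspondence tensor product E (x) F over
   l^oo(Omega), where E, F are the correspondences of matrices supported on
   the patterns S1, S2 with column-square-summable columns:
   arrays c_{i k j} (A (x) B corresponds to a_{ik} b_{kj}) supported on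
   S1 i k /\ S2 k j with sup_j sum_{i,k} |c_{ikj}|^2 < oo. *)
Definition tens (S1 S2 : T -> T -> Prop) : set (T -> T -> T -> R[i]) :=
  [set c | (forall i k j, ~ (S1 i k /\ S2 k j) -> c i k j = 0) /\
           exists M : R, forall j,
             (\esum_(ik in [set: T * T]) (csq (c ik.1 ik.2 j))%:E <= M%:E)%E].

Definition ipTens (c d : T -> T -> T -> R[i]) (j : T) : R[i] :=
  csum (fun ik : T * T => (c ik.1 ik.2 j)^* * d ik.1 ik.2 j).

Definition patArv (P : T -> T -> R) (n : nat) (i j : T) : Prop :=
  Ppow P n i j != 0.
Definition patpArvp (P : T -> T -> R) (C : set T) (n : nat) (i j : T) : Prop :=
  Ppow P n i j != 0 /\ C i /\ C j.

Definition ArvTens (P : T -> T -> R) (n m : nat) :=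
  tens (patArv P n) (patArv P m).
Definition pArvTens (P : T -> T -> R) (C : set T) (n m : nat) :=
  tens (patpArvp P C n) (patpArvp P C m).

(* U_{n,m}, extended from elementary tensors:
   U(A (x) B) = (sqrt P^{n+m})^flat * [(sqrt P^n * A)(sqrt P^m * B)] *)
Definition U (P : T -> T -> R) (n m : nat) (c : T -> T -> T -> R[i])
  : T -> T -> R[i] :=
  fun i j => (flat (Num.sqrt (Ppow P (n + m) i j)))%:C%C *
    csum (fun k => (Num.sqrt (Ppow P n i k) * Num.sqrt (Ppow P m k j))%:C%C
                   * c i k j).

(* d = U_{n,m}^* X : d is the (adjoint) element of the tensor product with
   <U c, X> = <c, d> for every c in the tensor product *)
Definition is_Uadj (P : T -> T -> R) (n m : nat) (X : T -> T -> R[i])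
  (d : T -> T -> T -> R[i]) : Prop :=
  ArvTens P n m d /\
  forall c, ArvTens P n m c -> forall j, ipArv (U P n m c) X j = ipTens c d j.

Definition reducing (P : T -> T -> R) (C : set T) : Prop :=
  forall n m (X : T -> T -> R[i]), compress C (Arv P (n + m)) X ->
    forall d, is_Uadj P n m X d -> pArvTens P C n m d.

Definition is_path (P : T -> T -> R) (l : nat) (g : nat -> T) : Prop :=
  forall k, (k < l)%N -> 0 < P (g k) (g k.+1).

End ArvDefs.

(* Main.v *)
Require Import Defs.
From mathcomp Require Import all_boot all_algebra.
From mathcomp Require Import all_classical all_reals all_analysis.
From mathcomp Require Import order zify ring lra.
Import Order.TTheory GRing.Theory Num.Theory.
Local Open Scope ring_scope.
Local Open Scope classical_set_scope.
Section S.
Variable R : realType.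
Local Open Scope ereal_scope.

Lemma esum_single (I : choiceType) (a : I -> \bar R) t :
  (forall x, x != t -> a x = 0) -> 0 <= a t ->
  \esum_(x in [set: I]) a x = a t.
Proof.
move=> a0 at0.
have ag0 : forall x, [set: I] x -> 0 <= a x.
  by move=> x _; case: (eqVneq x t) => [->//|/a0 ->].
rewrite (esumID [set t]) // setTI esum_set1 // esum1 ?adde0 //.
by move=> x [_ /= xt]; apply: a0; apply/eqP.
Qed.

Lemma le_esum_term (I : choiceType) (a : I -> \bar R) t :
  (forall x, 0 <= a x) -> a t <= \esum_(x in [set: I]) a x.
Proof.
move=> a0; rewrite (esumID [set t]) ?setTI ?esum_set1 //.
by rewrite leeDl // esum_ge0.
Qed.

Lemma esum_slice (I : choiceType) (a : I * I -> \bar R) i :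
  (forall x, x.1 != i -> a x = 0) -> (forall x, 0 <= a x) ->
  \esum_(x in [set: I * I]) a x = \esum_(k in [set: I]) a (i, k).
Proof.
move=> a0 ag0.
rewrite (esumID ((pair i) @` [set: I])) //.
rewrite [X in _ + X]esum1 ?adde0.
  rewrite setTI esum_image //.
  by move=> x y _ _ [].
move=> [x1 x2] [_ /= H]; apply: a0 => /=; apply/negP => /eqP ex.
by apply: H; exists x2 => //; rewrite ex.
Qed.

Lemma esum_scale_le (I : choiceType) (c : \bar R) (a : I -> \bar R) :
  0 <= c -> (forall x, 0 <= a x) ->
  \esum_(x in [set: I]) (c * a x) <= c * \esum_(x in [set: I]) a x.
Proof.
move=> c0 a0; apply: ge_ereal_sup => _ [X XS <-].
rewrite -ge0_mule_fsumr //; apply: lee_wpmul2l => //.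
by apply: ereal_sup_ubound; exists X.
Qed.

Lemma esum_swap (I : choiceType) (a : I -> I -> \bar R) :
  (forall x y, 0 <= a x y) ->
  \esum_(x in [set: I]) \esum_(y in [set: I]) a x y =
  \esum_(y in [set: I]) \esum_(x in [set: I]) a x y.
Proof.
move=> a0; rewrite !esum_esum //.
rewrite (reindex_esum ([set: I] `*`` (fun=> [set: I])) ([set: I] `*`` (fun=> [set: I]))
   (fun x => (x.2, x.1))) //.
split.
- by move=> x _.
- by move=> [x1 x2] [y1 y2] _ _ /= [-> ->].
- by move=> [x1 x2] _; exists (x2, x1).
Qed.
Variable T : countType.
Variable P : T -> T -> R.
Hypothesis P0 : forall i j, (0 <= P i j)%R.
Hypothesis P1 : forall i, \esum_(j in [set: T]) (P i j)%:E = 1.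

Lemma Ppow_props t i :
  (forall k, 0 <= Ppow P t i k)%R /\ \esum_(k in [set: T]) (Ppow P t i k)%:E <= 1.
Proof.
elim: t i => [|t IH] i.
  split; first by move=> k /=; case: ifP.
  rewrite (@esum_single T _ i) /= ?eqxx // => x xi.
  by rewrite eq_sym (negPf xi).
pose S b := \esum_(k in [set: T]) (Ppow P t i k * P k b)%:E.
have [IH0 IH1] := IH i.
have f0 : forall k b, 0 <= (Ppow P t i k * P k b)%:E.
  by move=> k b; rewrite lee_fin mulr_ge0.
have S0 : forall b, 0 <= S b by move=> b; apply: esum_ge0.
have Stot : \esum_(b in [set: T]) S b <= 1.
  rewrite /S esum_swap //.
  apply: le_trans IH1; apply: le_esum => k _.
  under eq_esum do rewrite EFinM.
  have h := @esum_scale_le T (Ppow P t i k)%:E (fun b => (P k b)%:E).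
  rewrite P1 mule1 in h; apply: h; first by rewrite lee_fin.
  by move=> x; rewrite lee_fin.
have S1 : forall b, S b <= 1.
  by move=> b; apply: le_trans Stot; apply: le_esum_term.
have Sfin : forall b, S b \is a fin_num.
  by move=> b; rewrite ge0_fin_numE // (le_lt_trans (S1 b)) // ltry.
have E : forall b, Ppow P t.+1 i b = fine (S b) by [].
split; first by move=> k; rewrite E; apply: fine_ge0.
apply: le_trans Stot; apply: le_esum => b _.
by rewrite E fineK.
Qed.

Lemma Ppow_ge0 t i k : (0 <= Ppow P t i k)%R.
Proof. by case: (Ppow_props t i) => ->. Qed.

Lemma Ppow_le1 t i k : (Ppow P t i k <= 1)%R.
Proof.
have [h0 h1] := Ppow_props t i.
rewrite -lee_fin; apply: le_trans h1; apply: le_esum_term => x.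
by rewrite lee_fin.
Qed.

Lemma S_le1 t i b : \esum_(k in [set: T]) (Ppow P t i k * P k b)%:E <= 1.
Proof.
pose S b := \esum_(k in [set: T]) (Ppow P t i k * P k b)%:E.
have [IH0 IH1] := Ppow_props t i.
have f0 : forall k b, 0 <= (Ppow P t i k * P k b)%:E.
  by move=> k b'; rewrite lee_fin mulr_ge0.
have S0 : forall b, 0 <= S b by move=> b'; apply: esum_ge0.
have Stot : \esum_(b in [set: T]) S b <= 1.
  rewrite /S esum_swap //.
  apply: le_trans IH1; apply: le_esum => k _.
  under eq_esum do rewrite EFinM.
  have h := @esum_scale_le T (Ppow P t i k)%:E (fun b => (P k b)%:E).
  rewrite P1 mule1 in h; apply: h; first by rewrite lee_fin.
  by move=> x; rewrite lee_fin.
by apply: le_trans Stot; exact: (@le_esum_term T S b S0).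
Qed.

Lemma Ppow_step t i k b : (Ppow P t i k * P k b <= Ppow P t.+1 i b)%R.
Proof.
have f0 : forall k, 0 <= (Ppow P t i k * P k b)%:E.
  by move=> k'; rewrite lee_fin mulr_ge0 ?Ppow_ge0.
have S1 := S_le1 t i b.
have Sfin : \esum_(k in [set: T]) (Ppow P t i k * P k b)%:E \is a fin_num.
  by rewrite ge0_fin_numE ?esum_ge0 // (le_lt_trans S1) // ltry.
rewrite -lee_fin.
have -> : Ppow P t.+1 i b = fine (\esum_(k in [set: T]) (Ppow P t i k * P k b)%:E) by [].
rewrite fineK //.
exact: (@le_esum_term T (fun k => (Ppow P t i k * P k b)%:E) k f0).
Qed.

Lemma path_pos l g : is_path P l g -> forall t, (t <= l)%N -> (0 < Ppow P t (g 0%N) (g t))%R.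
Proof.
move=> hp; elim=> [|t IH] htl; first by rewrite /= eqxx ltr01.
have h1 : (t < l)%N by [].
apply: (lt_le_trans _ (Ppow_step t (g 0%N) (g t) (g t.+1))).
by rewrite mulr_gt0 // ?IH ?hp // ltnW.
Qed.

Lemma path_cat n m g1 g2 : is_path P n g1 -> is_path P m g2 -> g1 n = g2 0%N ->
  is_path P (n + m) (fun t => if (t <= n)%N then g1 t else g2 (t - n)%N).
Proof.
move=> h1 h2 e t ht /=.
case: (leqP t.+1 n) => h.
  have h' : (t <= n)%N by lia.
  rewrite h'; apply: h1; lia.
case: ifP => h'.
  have -> : t = n by lia.
  rewrite e; have -> : (n.+1 - n = 1)%N by lia.
  apply: h2; lia.
have -> : (t.+1 - n = (t - n).+1)%N by lia.
apply: h2; lia.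
Qed.

Lemma pos_path n i j : Ppow P n i j != 0%R ->
  exists g, is_path P n g /\ g 0%N = i /\ g n = j.
Proof.
elim: n j => [|n IH] j.
  rewrite /=; case: (eqVneq i j) => [<- _|_]; last by rewrite eqxx.
  by exists (fun=> i); split.
move=> hS.
have hS' : \esum_(k in [set: T]) (Ppow P n i k * P k j)%:E != 0.
  by apply: contra hS => /eqP /= ->.
have [k hk] : exists k, (Ppow P n i k * P k j)%:E != 0.
  case: (pselect (exists k, (Ppow P n i k * P k j)%:E != 0)) => // H.
  exfalso; move/eqP: hS'; apply; apply: esum1 => k _.
  case: (eqVneq ((Ppow P n i k * P k j)%:E) 0) => // hk.
  by exfalso; apply: H; exists k.
have hk' : (Ppow P n i k * P k j != 0)%R by apply: contra hk => /eqP ->.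
move: hk'; rewrite mulf_eq0 negb_or => /andP[hn hp].
have [g [hg [g0 gn]]] := IH k hn.
exists (fun t => if (t <= n)%N then g t else j); split; last first.
  by rewrite leq0n ltnn; split.
move=> t ht.
case: (leqP t.+1 n) => h.
  have h' : (t <= n)%N by lia.
  rewrite h'; apply: hg; lia.
have -> : t = n by lia.
rewrite leqnn gn lt_neqAle eq_sym hp.
exact: P0.
Qed.
End S.

Section S2.
Variable R : realType.

Lemma max0_ge0 (x : R) : (0 <= Num.max x 0)%R.
Proof. by rewrite le_max lexx orbT. Qed.

Lemma rsum_single (I : choiceType) (f : I -> R) t :
  (forall x, x != t -> f x = 0%R) -> rsum f = f t.
Proof.
move=> f0; rewrite /rsum.
rewrite (@esum_single R I (fun x => (Num.max (f x) 0)%:E) t); last first.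
- by rewrite lee_fin max0_ge0.
- by move=> x /f0 ->; rewrite maxxx.
rewrite (@esum_single R I (fun x => (Num.max (- f x) 0)%:E) t); last first.
- by rewrite lee_fin max0_ge0.
- by move=> x /f0 ->; rewrite oppr0 maxxx.
rewrite /= /preorder.Order.max.
by case: ifP => h; case: ifP => h'; lra.
Qed.

Lemma csum_single (I : choiceType) (f : I -> R[i]) t :
  (forall x, x != t -> f x = 0%R) -> csum f = f t.
Proof.
move=> f0; rewrite /csum !(@rsum_single I _ t).
- by rewrite [RHS]complexE.
- by move=> x /f0 ->.
- by move=> x /f0 ->.
Qed.

Lemma rsum_opp (I : choiceType) (f : I -> R) :
  rsum (fun x => - f x)%R = (- rsum f)%R.
Proof.
rewrite /rsum.
have -> : (fun x => (Num.max (- - f x) 0)%:E) = (fun x => (Num.max (f x) 0)%:E).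
  by apply: funext => x; rewrite opprK.
by rewrite opprB.
Qed.

Lemma csum_conj (I : choiceType) (f : I -> R[i]) :
  csum (fun x => (f x)^*)%R = ((csum f)^*)%R.
Proof.
rewrite /csum.
have -> : (fun x => complex.Re (f x)^*) = (fun x => complex.Re (f x)).
  by apply: funext => x; case: (f x).
have -> : (fun x => complex.Im (f x)^*) = (fun x => - complex.Im (f x))%R.
  by apply: funext => x; case: (f x).
rewrite rsum_opp.
set a := rsum _; set b := rsum _.
apply/eqP; rewrite eq_complex /=; apply/andP; split; apply/eqP; ring.
Qed.

Lemma rsum_slice (I : choiceType) (F : I * I -> R) i :
  (forall x, x.1 != i -> F x = 0%R) -> rsum F = rsum (fun k => F (i, k)).
Proof.
move=> F0; rewrite /rsum.
rewrite (@esum_slice R I (fun x => (Num.max (F x) 0)%:E) i); first last.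
- by move=> x; rewrite lee_fin max0_ge0.
- by move=> x /F0 ->; rewrite maxxx.
rewrite (@esum_slice R I (fun x => (Num.max (- F x) 0)%:E) i) //.
- by move=> x /F0 ->; rewrite oppr0 maxxx.
- by move=> x; rewrite lee_fin max0_ge0.
Qed.

Lemma csum_slice (I : choiceType) (F : I * I -> R[i]) i :
  (forall x, x.1 != i -> F x = 0%R) -> csum F = csum (fun k => F (i, k)).
Proof.
move=> F0; rewrite /csum (@rsum_slice I _ i) ?(@rsum_slice I (fun x => complex.Im (F x)) i) //.
- by move=> x /F0 ->.
- by move=> x /F0 ->.
Qed.
End S2.

Section S3.
Variable R : realType.
Variable T : countType.
Variable P : T -> T -> R.
Hypothesis P0 : forall i j, (0 <= P i j)%R.
Hypothesis P1 : forall i, \esum_(j in [set: T]) (P i j)%:E = 1%E.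
Variable C : set T.

Lemma csum_zero (I : choiceType) (t : I) (f : I -> R[i]) :
  (forall x, f x = 0%R) -> csum f = 0%R.
Proof. by move=> f0; rewrite (@csum_single R I f t) // => x _. Qed.

Lemma conjR (x : R) : ((x%:C)%C)^*%R = (x%:C)%C.
Proof. exact: complex.conjc_real. Qed.

Lemma realC_mulV (x : R) : x != 0%R -> ((x^-1)%:C * x%:C)%C = 1%R.
Proof.
move=> x0; apply/eqP; rewrite complex.eq_complex /= mulr0 mul0r subr0 addr0.
by rewrite mulVf // mulr0 !eqxx.
Qed.

Lemma ind_ne0 x : @ind R T C x != 0%R -> C x.
Proof. by rewrite /ind; case: asboolP => // _; rewrite eqxx. Qed.

Lemma ind1 x : C x -> @ind R T C x = 1%R.
Proof. by move=> h; rewrite /ind asboolT. Qed.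

Lemma csq0 : csq (0 : R[i]) = 0%R.
Proof. by rewrite /csq /= expr0n /= addr0. Qed.

Lemma csq_ge0 (z : R[i]) : (0 <= csq z)%R.
Proof. by rewrite /csq addr_ge0 // sqr_ge0. Qed.

Lemma dir2 :
  (forall (l : nat) (g : nat -> T), is_path P l g ->
      C (g 0%N) -> C (g l) -> forall k, (k <= l)%N -> C (g k)) ->
  reducing P C.
Proof.
move=> Hpath n m X [A hA eX] d [[dsupp dbnd] hd].
split; last exact: dbnd.
move=> i k j Hn.
case: (eqVneq (d i k j) 0%R) => // dne.
exfalso; apply: Hn.
have [hn hm] : patArv P n i k /\ patArv P m k j.
  case: (pselect (patArv P n i k /\ patArv P m k j)) => // H.
  by move: dne; rewrite dsupp // eqxx.
pose c := fun i' k' j' => if (i' == i) && (k' == k) && (j' == j) then (1 : R[i]) else 0%R.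
have hc : ArvTens P n m c.
  split.
    move=> i' k' j' H; rewrite /c; case: ifP => // /andP[/andP[/eqP e1 /eqP e2] /eqP e3].
    by subst; exfalso; apply: H; split.
  exists 1%R => j'.
  rewrite (@esum_single R _ _ (i, k)).
  - rewrite /c /= !eqxx /=; case: ifP => _; rewrite lee_fin ?csq0 //.
    by rewrite /csq /= expr1n expr0n /= addr0.
  - move=> [x1 x2] hx; rewrite /c /=.
    have -> : (x1 == i) && (x2 == k) = false.
      by apply/negbTE; move: hx; rewrite xpair_eqE.
    by rewrite /= csq0.
  - by rewrite lee_fin csq_ge0.
have := hd c hc j.
rewrite /ipArv /ipTens.
rewrite (@csum_single R _ _ i); last first.
  move=> x hx; rewrite /U.
  rewrite (@csum_zero _ k).
    by rewrite mulr0 rmorph0 mul0r.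
  by move=> y; rewrite /c (negbTE hx) /= mulr0.
rewrite (@csum_single R _ _ (i, k)); last first.
  move=> [x1 x2] hx; rewrite /c /=.
  have -> : (x1 == i) && (x2 == k) = false.
    by apply/negbTE; move: hx; rewrite xpair_eqE.
  by rewrite /= rmorph0 mul0r.
rewrite /c /= !eqxx /= rmorph1 mul1r => e.
have Xne : X i j != 0%R by apply: contra dne; rewrite -e => /eqP ->; rewrite mulr0.
rewrite -eX /= in Xne.
have Ci : C i.
  by apply: ind_ne0; apply: contra Xne => /eqP ->; rewrite !mul0r.
have Cj : C j.
  by apply: ind_ne0; apply: contra Xne => /eqP ->; rewrite !mulr0.
have [g1 [hg1 [g10 g1n]]] := @pos_path R T P P0 n i k hn.
have [g2 [hg2 [g20 g2m]]] := @pos_path R T P P0 m k j hm.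
have hg := @path_cat R T P n m g1 g2 hg1 hg2 (etrans g1n (esym g20)).
set g := (fun t => _) in hg.
have gn : g n = k by rewrite /g leqnn.
have g0 : g 0%N = i by rewrite /g leq0n.
have gl : g (n + m)%N = j.
  rewrite /g; case: ifP => h.
    have m0 : m = 0%N by lia.
    by subst m; rewrite addn0 g1n -g20 g2m.
  by rewrite addKn.
have Ck : C k.
  by rewrite -gn; apply: (Hpath _ g hg); rewrite ?g0 ?gl // leq_addr.
by split; split.
Qed.

Lemma dir1 : reducing P C ->
  (forall (l : nat) (g : nat -> T), is_path P l g ->
      C (g 0%N) -> C (g l) -> forall k, (k <= l)%N -> C (g k)).
Proof.
move=> hred l g hg C0 Cl k hk.
case: (pselect (C (g k))) => // nCk; exfalso.
have hl : l = (k + (l - k))%N by lia.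
move: (l - k)%N hl => m hl; subst l.
set n := k.
set i := g 0%N; set j := g (n + m)%N; set kk := g n.
have pl : (0 < Ppow P (n + m) i j)%R by exact: (@path_pos R T P P0 P1 _ g hg (n + m)%N (leqnn _)).
have pn : (0 < Ppow P n i kk)%R by exact: (@path_pos R T P P0 P1 _ g hg n (leq_addr _ _)).
have pm : (0 < Ppow P m kk j)%R.
  pose g' := fun t => g (n + t)%N.
  have hg' : is_path P m g'.
    by move=> t ht; rewrite /g' addnS; apply: hg; rewrite ltn_add2l.
  have := @path_pos R T P P0 P1 _ g' hg' m (leqnn m).
  by rewrite /g' addn0.
pose sp := Num.sqrt (Ppow P (n + m) i j).
have sp0 : (0 < sp)%R by rewrite sqrtr_gt0.
pose A := fun a b => if (a == i) && (b == j) then (sp%:C)%C else 0%R.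
pose X := fun a b => @ind R T C a * A a b * @ind R T C b.
pose s := fun k' => (Num.sqrt (Ppow P n i k') * Num.sqrt (Ppow P m k' j))%R.
pose d := fun a k' b => if (a == i) && (b == j) then ((s k')%:C)%C else 0%R.
have hX : compress C (Arv P (n + m)) X.
  exists A => //; split.
    move=> a b h0; rewrite /A; case: ifP => // /andP[/eqP ea /eqP eb].
    by move: h0; rewrite ea eb => h0; move: pl; rewrite h0 ltxx.
  exists 1%R => b.
  rewrite (@esum_single R _ _ i).
  - rewrite /A eqxx /=; case: ifP => _; rewrite lee_fin ?csq0 //.
    rewrite /csq /= expr0n /= addr0 sqr_sqrtr ?(ltW pl) //.
    exact: (@Ppow_le1 R T P P0 P1).
  - by move=> x hx; rewrite /A (negbTE hx) /= csq0.
  - by rewrite lee_fin csq_ge0.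
have hd : is_Uadj P n m X d.
  split.
    split.
      move=> a k' b H; rewrite /d; case: ifP => // /andP[/eqP ea /eqP eb].
      rewrite /s; case: (eqVneq (Ppow P n i k') 0%R) => [->|h1].
        by rewrite sqrtr0 mul0r.
      case: (eqVneq (Ppow P m k' j) 0%R) => [->|h2].
        by rewrite sqrtr0 mulr0.
      by exfalso; apply: H; rewrite ea eb; split.
    exists 1%R => b.
    rewrite (@esum_slice R _ _ i); first last.
    - by move=> x; rewrite lee_fin csq_ge0.
    - by move=> x hx; rewrite /d (negbTE hx) /= csq0.
    rewrite /d /= eqxx /=; case: (eqVneq b j) => [_|bj]; last first.
      by rewrite esum1 // => x _; rewrite csq0.
    have [_ h1] := @Ppow_props R T P P0 P1 n i.
    apply: le_trans h1; apply: le_esum => k' _.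
    rewrite lee_fin /csq /= expr0n /= addr0 /s exprMn !sqr_sqrtr ?(@Ppow_ge0 R T P P0 P1) //.
    by rewrite ler_piMr ?(@Ppow_ge0 R T P P0 P1) ?(@Ppow_le1 R T P P0 P1).
  move=> c hc b; rewrite /ipArv /ipTens.
  case: (eqVneq b j) => [->|bj]; last first.
    rewrite (@csum_zero _ i); last first.
      by move=> x; rewrite /X /A (negbTE bj) andbF mulr0 mul0r mulr0.
    rewrite (@csum_zero _ (i, i)) //.
    by move=> x; rewrite /d (negbTE bj) andbF mulr0.
  rewrite (@csum_single R _ _ i); last first.
    by move=> x hx; rewrite /X /A (negbTE hx) /= mulr0 mul0r mulr0.
  rewrite (@csum_slice R _ _ i); last first.
    by move=> x hx; rewrite /d (negbTE hx) /= mulr0.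
  rewrite /X /A /d !eqxx /= ind1 // ind1 // mul1r mulr1.
  rewrite /U /flat sp0 rmorphM /= conjR -csum_conj.
  have -> : (fun x => ((Num.sqrt (Ppow P n i x) * Num.sqrt (Ppow P m x j))%:C%C * c i x j)^*%R)
     = (fun x => (c i x j)^* * ((s x)%:C)%C)%R.
    by apply: funext => x; rewrite rmorphM /= conjR mulrC.
  by rewrite mulrAC realC_mulV ?mul1r // gt_eqF.
have [hsupp _] := hred n m X hX d hd.
have : d i kk j != 0%R.
  rewrite /d !eqxx /= /s; apply/negP => /eqP [].
  by apply/eqP; rewrite mulf_neq0 // gt_eqF // sqrtr_gt0.
apply/negP/negPn/eqP; apply: hsupp => -[[_ [_ Ck]] _].
exact: nCk.
Qed.
End S3.

Theorem mainTheorem13 (R : realType) (T : countType) (P : T -> T -> R)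
  (C : set T) :
  stochastic P ->
  (reducing P C <->
   (forall (l : nat) (g : nat -> T), is_path P l g ->
      C (g 0%N) -> C (g l) -> forall k, (k <= l)%N -> C (g k))).
Proof.
move=> [P0 P1]; split.
  exact: (@dir1 R T P P0 P1 C).
exact: (@dir2 R T P P0 C).
Qed.
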